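(* Consider hexahedra $p=(p_1,\ldots,p_8)\in(\mathbf{R}^3)^8$ with faces given by the vertex cycles $(1,2,3,4)$, $(5,6,7,8)$ and $(i,i+1,i+5,i+4)$ for $i=1,2,3$ and $(4,1,5,8)$ (so the edges are those of the two cycles $1234$, $5678$ and the edges $\{i,i+4\}$), and the gradient vector field $$Y_p=\tfrac12\begin{pmatrix}\nu(3,6,8)+\nu(2,5,4)+\nu(6,5,8,4,3,2)\\ \nu(4,7,5)+\nu(3,6,1)+\nu(7,6,5,1,4,3)\\ \nu(1,8,6)+\nu(4,7,2)+\nu(8,7,6,2,1,4)\\ \nu(2,5,7)+\nu(1,8,3)+\nu(5,8,7,3,2,1)\\ \nu(2,7,4)+\nu(1,6,8)+\nu(6,7,8,4,1,2)\\ \nu(3,8,1)+\nu(2,7,5)+\nu(7,8,5,1,2,3)\\ \nu(4,5,2)+\nu(3,8,6)+\nu(8,5,6,2,3,4)\\ \nu(1,6,3)+\nu(4,5,7)+\nu(5,6,7,3,4,1)\end{pmatrix}.$$ Then every $Y$-optimal $p$ is a cube, i.e. $p_1,\ldots,p_8$ are the vertices of a cube whose faces are the six vertex cycles listed above.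
   Context: Notation: $\nu(i_1,\ldots,i_k)=p_{i_1}\times p_{i_2}+\cdots+p_{i_{k-1}}\times p_{i_k}+p_{i_k}\times p_{i_1}$. A configuration $p\in(\mathbf{R}^3)^n$ (not all points equal) is called $Y$-optimal if there exist $q=\mu p+(c,\ldots,c)$ with $\mu>0$, $c\in\mathbf{R}^3$, and a real number $\lambda\neq0$ such that $Y_q=\lambda q$. *)

(* Defs.v *)
From HB Require Import structures.
From mathcomp Require Import all_boot all_order all_algebra.
From mathcomp Require Import reals.
Set Implicit Arguments. Unset Strict Implicit. Unset Printing Implicit Defensive.
Import Order.TTheory GRing.Theory Num.Theory.
Local Open Scope ring_scope.

Section Hexa.
Variable R : realType.

Notation vec := 'rV[R]_3.

Definition cx (a : vec) : R := a ord0 (inord 0).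
Definition cy (a : vec) : R := a ord0 (inord 1).
Definition cz (a : vec) : R := a ord0 (inord 2).

Definition cross (a b : vec) : vec :=
  \row_(k < 3)
    (if (k : nat) == 0%N then cy a * cz b - cz a * cy b
     else if (k : nat) == 1%N then cz a * cx b - cx a * cz b
     else cx a * cy b - cy a * cx b).

Definition dot (a b : vec) : R := \sum_(k < 3) a ord0 k * b ord0 k.

(* A configuration of 8 points, indexed 0..7; vertex number k (1-based, as in
   the paper) is  pt p k = p (k-1). *)
Definition pt (p : 'I_8 -> vec) (k : nat) : vec := p (inord k.-1).

(* nu(i_1,...,i_k) = p_{i1} x p_{i2} + ... + p_{i(k-1)} x p_{ik} + p_{ik} x p_{i1} *)
Fixpoint nu_aux (p : 'I_8 -> vec) (first cur : nat) (rest : seq nat) : vec :=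
  match rest with
  | [::] => cross (pt p cur) (pt p first)
  | y :: r => cross (pt p cur) (pt p y) + nu_aux p first y r
  end.

Definition nu (p : 'I_8 -> vec) (s : seq nat) : vec :=
  match s with
  | [::] => 0
  | a :: r => nu_aux p a a r
  end.

Definition Yrow (p : 'I_8 -> vec) (k : nat) : vec :=
  (1/2 : R) *:
  match k with
  | 1 => nu p [:: 3; 6; 8] + nu p [:: 2; 5; 4] + nu p [:: 6; 5; 8; 4; 3; 2]
  | 2 => nu p [:: 4; 7; 5] + nu p [:: 3; 6; 1] + nu p [:: 7; 6; 5; 1; 4; 3]
  | 3 => nu p [:: 1; 8; 6] + nu p [:: 4; 7; 2] + nu p [:: 8; 7; 6; 2; 1; 4]
  | 4 => nu p [:: 2; 5; 7] + nu p [:: 1; 8; 3] + nu p [:: 5; 8; 7; 3; 2; 1]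
  | 5 => nu p [:: 2; 7; 4] + nu p [:: 1; 6; 8] + nu p [:: 6; 7; 8; 4; 1; 2]
  | 6 => nu p [:: 3; 8; 1] + nu p [:: 2; 7; 5] + nu p [:: 7; 8; 5; 1; 2; 3]
  | 7 => nu p [:: 4; 5; 2] + nu p [:: 3; 8; 6] + nu p [:: 8; 5; 6; 2; 3; 4]
  | 8 => nu p [:: 1; 6; 3] + nu p [:: 4; 5; 7] + nu p [:: 5; 6; 7; 3; 4; 1]
  | _ => 0
  end.

Definition Y (p : 'I_8 -> vec) : 'I_8 -> vec := fun i => Yrow p i.+1.

Definition Y_optimal (p : 'I_8 -> vec) : Prop :=
  (exists i j : 'I_8, p i != p j) /\
  exists (mu : R) (c : vec) (lambda : R),
    0 < mu /\ lambda != 0 /\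
    let q := fun i => mu *: p i + c in
    forall i : 'I_8, Y q i = lambda *: q i.

(* p_1..p_8 are the vertices of a cube whose faces are the vertex cycles
   1234, 5678, (i,i+1,i+5,i+4) for i=1,2,3, and 4158:
   there is a centre c and three pairwise orthogonal nonzero vectors u v w of
   equal length with p_k = c +- u +- v +- w in the pattern below. *)
Definition is_cube (p : 'I_8 -> vec) : Prop :=
  exists (c u v w : vec),
    u != 0 /\ dot u v = 0 /\ dot v w = 0 /\ dot u w = 0 /\
    dot u u = dot v v /\ dot v v = dot w w /\
    pt p 1 = c - u - v - w /\
    pt p 2 = c + u - v - w /\
    pt p 3 = c + u + v - w /\
    pt p 4 = c - u + v - w /\
    pt p 5 = c - u - v + w /\
    pt p 6 = c + u - v + w /\
    pt p 7 = c + u + v + w /\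
    pt p 8 = c - u + v + w.

End Hexa.

(* Main.v *)
From HB Require Import structures.
Require Import Defs.
From mathcomp Require Import all_boot all_order all_algebra.
From mathcomp Require Import reals.
From mathcomp Require Import ring lra.
Set Implicit Arguments. Unset Strict Implicit. Unset Printing Implicit Defensive.
Import Order.TTheory GRing.Theory Num.Theory.
Local Open Scope ring_scope.

Section S.
Variable R : realType.
Notation vec := 'rV[R]_3.
Implicit Types a b : vec.

Lemma cxD a b : cx (a + b) = cx a + cx b. Proof. by rewrite /cx !mxE. Qed.
Lemma cyD a b : cy (a + b) = cy a + cy b. Proof. by rewrite /cy !mxE. Qed.
Lemma czD a b : cz (a + b) = cz a + cz b. Proof. by rewrite /cz !mxE. Qed.
Lemma cxN a : cx (- a) = - cx a. Proof. by rewrite /cx !mxE. Qed.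
Lemma cyN a : cy (- a) = - cy a. Proof. by rewrite /cy !mxE. Qed.
Lemma czN a : cz (- a) = - cz a. Proof. by rewrite /cz !mxE. Qed.
Lemma cxZ (k : R) a : cx (k *: a) = k * cx a. Proof. by rewrite /cx !mxE. Qed.
Lemma cyZ (k : R) a : cy (k *: a) = k * cy a. Proof. by rewrite /cy !mxE. Qed.
Lemma czZ (k : R) a : cz (k *: a) = k * cz a. Proof. by rewrite /cz !mxE. Qed.
Lemma cx0 : cx (0 : vec) = 0. Proof. by rewrite /cx !mxE. Qed.
Lemma cy0 : cy (0 : vec) = 0. Proof. by rewrite /cy !mxE. Qed.
Lemma cz0 : cz (0 : vec) = 0. Proof. by rewrite /cz !mxE. Qed.
Lemma cx_cross a b : cx (cross a b) = cy a * cz b - cz a * cy b.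
Proof. by rewrite {1}/cx /cross !mxE inordK. Qed.
Lemma cy_cross a b : cy (cross a b) = cz a * cx b - cx a * cz b.
Proof. by rewrite {1}/cy /cross !mxE inordK. Qed.
Lemma cz_cross a b : cz (cross a b) = cx a * cy b - cy a * cx b.
Proof. by rewrite {1}/cz /cross !mxE inordK. Qed.
Lemma dotE a b : dot a b = cx a * cx b + cy a * cy b + cz a * cz b.
Proof.
rewrite /dot !big_ord_recr big_ord0 /= add0r /cx /cy /cz.
have -> : widen_ord (leqnSn 2) (widen_ord (leqnSn 1) ord_max) = inord 0 :> 'I_3 by apply: val_inj; rewrite /= inordK.
have -> : widen_ord (leqnSn 2) ord_max = inord 1 :> 'I_3 by apply: val_inj; rewrite /= inordK.
have -> : ord_max = inord 2 :> 'I_3 by apply: val_inj; rewrite /= inordK.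
done.
Qed.
Lemma vec_eq a b : cx a = cx b -> cy a = cy b -> cz a = cz b -> a = b.
Proof.
move=> h0 h1 h2; apply/rowP => j.
case: j => [[|[|[|//]]] Hj].
- by move: h0; rewrite /cx; have -> : (inord 0 : 'I_3) = Ordinal Hj by apply: val_inj; rewrite /= inordK.
- by move: h1; rewrite /cy; have -> : (inord 1 : 'I_3) = Ordinal Hj by apply: val_inj; rewrite /= inordK.
- by move: h2; rewrite /cz; have -> : (inord 2 : 'I_3) = Ordinal Hj by apply: val_inj; rewrite /= inordK.
Qed.


Lemma pred1 : (1%R : nat).-1 = 0%N. Proof. by []. Qed.
Ltac getE e :=
  rewrite /Y inordK // in e; cbn [Yrow nu nu_aux] in e;
  rewrite !(cxZ, cxD, cx_cross, cyZ, cyD, cy_cross, czZ, czD, cz_cross) /pt !natn in e;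
  rewrite ?pred1 in e; cbn [Nat.pred] in e;
  rewrite ?(cxZ, cxD, cyZ, cyD, czZ, czD) in e.
Definition tC (Q : 'I_8 -> vec) : vec := Q (inord 0%N) + Q (inord 1%N) + Q (inord 2%N) + Q (inord 3%N) + Q (inord 4%N) + Q (inord 5%N) + Q (inord 6%N) + Q (inord 7%N).
Definition tU (Q : 'I_8 -> vec) : vec := - Q (inord 0%N) + Q (inord 1%N) + Q (inord 2%N) - Q (inord 3%N) - Q (inord 4%N) + Q (inord 5%N) + Q (inord 6%N) - Q (inord 7%N).
Definition tV (Q : 'I_8 -> vec) : vec := - Q (inord 0%N) - Q (inord 1%N) + Q (inord 2%N) + Q (inord 3%N) - Q (inord 4%N) - Q (inord 5%N) + Q (inord 6%N) + Q (inord 7%N).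
Definition tW (Q : 'I_8 -> vec) : vec := - Q (inord 0%N) - Q (inord 1%N) - Q (inord 2%N) - Q (inord 3%N) + Q (inord 4%N) + Q (inord 5%N) + Q (inord 6%N) + Q (inord 7%N).
Definition tA (Q : 'I_8 -> vec) : vec := Q (inord 0%N) - Q (inord 1%N) + Q (inord 2%N) - Q (inord 3%N) + Q (inord 4%N) - Q (inord 5%N) + Q (inord 6%N) - Q (inord 7%N).
Definition tB (Q : 'I_8 -> vec) : vec := Q (inord 0%N) + Q (inord 1%N) - Q (inord 2%N) - Q (inord 3%N) - Q (inord 4%N) - Q (inord 5%N) + Q (inord 6%N) + Q (inord 7%N).
Definition tD (Q : 'I_8 -> vec) : vec := Q (inord 0%N) - Q (inord 1%N) - Q (inord 2%N) + Q (inord 3%N) - Q (inord 4%N) + Q (inord 5%N) + Q (inord 6%N) - Q (inord 7%N).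
Definition tE (Q : 'I_8 -> vec) : vec := - Q (inord 0%N) + Q (inord 1%N) - Q (inord 2%N) + Q (inord 3%N) + Q (inord 4%N) - Q (inord 5%N) + Q (inord 6%N) - Q (inord 7%N).
Ltac lin2 := rewrite ?(cxD, cxN, cxZ, cx0, cyD, cyN, cyZ, cy0, czD, czN, czZ, cz0).
Ltac lin := rewrite ?(cxD, cxN, cxZ, cx0, cyD, cyN, cyZ, cy0, czD, czN, czZ, cz0, cx_cross, cy_cross, cz_cross).
Lemma Qfacts (Q : 'I_8 -> vec) (l : R) : l != 0 ->
  (forall i, Y Q i = l *: Q i) ->
  tA Q = 0 /\ tB Q = 0 /\ tD Q = 0 /\ tE Q = 0 /\
  cross (tV Q) (tW Q) = l *: tU Q /\ cross (tW Q) (tU Q) = l *: tV Q /\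
  cross (tU Q) (tV Q) = l *: tW Q.
Proof.
move=> hl H.
have e0x := congr1 (@cx R) (H (inord 0%N)); getE e0x.
have e0y := congr1 (@cy R) (H (inord 0%N)); getE e0y.
have e0z := congr1 (@cz R) (H (inord 0%N)); getE e0z.
have e1x := congr1 (@cx R) (H (inord 1%N)); getE e1x.
have e1y := congr1 (@cy R) (H (inord 1%N)); getE e1y.
have e1z := congr1 (@cz R) (H (inord 1%N)); getE e1z.
have e2x := congr1 (@cx R) (H (inord 2%N)); getE e2x.
have e2y := congr1 (@cy R) (H (inord 2%N)); getE e2y.
have e2z := congr1 (@cz R) (H (inord 2%N)); getE e2z.
have e3x := congr1 (@cx R) (H (inord 3%N)); getE e3x.
have e3y := congr1 (@cy R) (H (inord 3%N)); getE e3y.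
have e3z := congr1 (@cz R) (H (inord 3%N)); getE e3z.
have e4x := congr1 (@cx R) (H (inord 4%N)); getE e4x.
have e4y := congr1 (@cy R) (H (inord 4%N)); getE e4y.
have e4z := congr1 (@cz R) (H (inord 4%N)); getE e4z.
have e5x := congr1 (@cx R) (H (inord 5%N)); getE e5x.
have e5y := congr1 (@cy R) (H (inord 5%N)); getE e5y.
have e5z := congr1 (@cz R) (H (inord 5%N)); getE e5z.
have e6x := congr1 (@cx R) (H (inord 6%N)); getE e6x.
have e6y := congr1 (@cy R) (H (inord 6%N)); getE e6y.
have e6z := congr1 (@cz R) (H (inord 6%N)); getE e6z.
have e7x := congr1 (@cx R) (H (inord 7%N)); getE e7x.
have e7y := congr1 (@cy R) (H (inord 7%N)); getE e7y.
have e7z := congr1 (@cz R) (H (inord 7%N)); getE e7z.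
split; last split; last split; last split; last split; last split.
- apply: vec_eq; rewrite /tA /tB /tD /tE /tU /tV /tW; lin.
  + apply: (mulfI hl); rewrite mulr0.
    rewrite (_ : l * _ = (1) * (l * cx (Q (inord 0%N))) + (-1) * (l * cx (Q (inord 1%N))) + (1) * (l * cx (Q (inord 2%N))) + (-1) * (l * cx (Q (inord 3%N))) + (1) * (l * cx (Q (inord 4%N))) + (-1) * (l * cx (Q (inord 5%N))) + (1) * (l * cx (Q (inord 6%N))) + (-1) * (l * cx (Q (inord 7%N)))); last by ring.
    rewrite -e0x -e1x -e2x -e3x -e4x -e5x -e6x -e7x; ring.
  + apply: (mulfI hl); rewrite mulr0.
    rewrite (_ : l * _ = (1) * (l * cy (Q (inord 0%N))) + (-1) * (l * cy (Q (inord 1%N))) + (1) * (l * cy (Q (inord 2%N))) + (-1) * (l * cy (Q (inord 3%N))) + (1) * (l * cy (Q (inord 4%N))) + (-1) * (l * cy (Q (inord 5%N))) + (1) * (l * cy (Q (inord 6%N))) + (-1) * (l * cy (Q (inord 7%N)))); last by ring.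
    rewrite -e0y -e1y -e2y -e3y -e4y -e5y -e6y -e7y; ring.
  + apply: (mulfI hl); rewrite mulr0.
    rewrite (_ : l * _ = (1) * (l * cz (Q (inord 0%N))) + (-1) * (l * cz (Q (inord 1%N))) + (1) * (l * cz (Q (inord 2%N))) + (-1) * (l * cz (Q (inord 3%N))) + (1) * (l * cz (Q (inord 4%N))) + (-1) * (l * cz (Q (inord 5%N))) + (1) * (l * cz (Q (inord 6%N))) + (-1) * (l * cz (Q (inord 7%N)))); last by ring.
    rewrite -e0z -e1z -e2z -e3z -e4z -e5z -e6z -e7z; ring.
- apply: vec_eq; rewrite /tA /tB /tD /tE /tU /tV /tW; lin.
  + apply: (mulfI hl); rewrite mulr0.
    rewrite (_ : l * _ = (1) * (l * cx (Q (inord 0%N))) + (1) * (l * cx (Q (inord 1%N))) + (-1) * (l * cx (Q (inord 2%N))) + (-1) * (l * cx (Q (inord 3%N))) + (-1) * (l * cx (Q (inord 4%N))) + (-1) * (l * cx (Q (inord 5%N))) + (1) * (l * cx (Q (inord 6%N))) + (1) * (l * cx (Q (inord 7%N)))); last by ring.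
    rewrite -e0x -e1x -e2x -e3x -e4x -e5x -e6x -e7x; ring.
  + apply: (mulfI hl); rewrite mulr0.
    rewrite (_ : l * _ = (1) * (l * cy (Q (inord 0%N))) + (1) * (l * cy (Q (inord 1%N))) + (-1) * (l * cy (Q (inord 2%N))) + (-1) * (l * cy (Q (inord 3%N))) + (-1) * (l * cy (Q (inord 4%N))) + (-1) * (l * cy (Q (inord 5%N))) + (1) * (l * cy (Q (inord 6%N))) + (1) * (l * cy (Q (inord 7%N)))); last by ring.
    rewrite -e0y -e1y -e2y -e3y -e4y -e5y -e6y -e7y; ring.
  + apply: (mulfI hl); rewrite mulr0.
    rewrite (_ : l * _ = (1) * (l * cz (Q (inord 0%N))) + (1) * (l * cz (Q (inord 1%N))) + (-1) * (l * cz (Q (inord 2%N))) + (-1) * (l * cz (Q (inord 3%N))) + (-1) * (l * cz (Q (inord 4%N))) + (-1) * (l * cz (Q (inord 5%N))) + (1) * (l * cz (Q (inord 6%N))) + (1) * (l * cz (Q (inord 7%N)))); last by ring.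
    rewrite -e0z -e1z -e2z -e3z -e4z -e5z -e6z -e7z; ring.
- apply: vec_eq; rewrite /tA /tB /tD /tE /tU /tV /tW; lin.
  + apply: (mulfI hl); rewrite mulr0.
    rewrite (_ : l * _ = (1) * (l * cx (Q (inord 0%N))) + (-1) * (l * cx (Q (inord 1%N))) + (-1) * (l * cx (Q (inord 2%N))) + (1) * (l * cx (Q (inord 3%N))) + (-1) * (l * cx (Q (inord 4%N))) + (1) * (l * cx (Q (inord 5%N))) + (1) * (l * cx (Q (inord 6%N))) + (-1) * (l * cx (Q (inord 7%N)))); last by ring.
    rewrite -e0x -e1x -e2x -e3x -e4x -e5x -e6x -e7x; ring.
  + apply: (mulfI hl); rewrite mulr0.
    rewrite (_ : l * _ = (1) * (l * cy (Q (inord 0%N))) + (-1) * (l * cy (Q (inord 1%N))) + (-1) * (l * cy (Q (inord 2%N))) + (1) * (l * cy (Q (inord 3%N))) + (-1) * (l * cy (Q (inord 4%N))) + (1) * (l * cy (Q (inord 5%N))) + (1) * (l * cy (Q (inord 6%N))) + (-1) * (l * cy (Q (inord 7%N)))); last by ring.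
    rewrite -e0y -e1y -e2y -e3y -e4y -e5y -e6y -e7y; ring.
  + apply: (mulfI hl); rewrite mulr0.
    rewrite (_ : l * _ = (1) * (l * cz (Q (inord 0%N))) + (-1) * (l * cz (Q (inord 1%N))) + (-1) * (l * cz (Q (inord 2%N))) + (1) * (l * cz (Q (inord 3%N))) + (-1) * (l * cz (Q (inord 4%N))) + (1) * (l * cz (Q (inord 5%N))) + (1) * (l * cz (Q (inord 6%N))) + (-1) * (l * cz (Q (inord 7%N)))); last by ring.
    rewrite -e0z -e1z -e2z -e3z -e4z -e5z -e6z -e7z; ring.
- apply: vec_eq; rewrite /tA /tB /tD /tE /tU /tV /tW; lin.
  + apply: (mulfI hl); rewrite mulr0.
    rewrite (_ : l * _ = (-1) * (l * cx (Q (inord 0%N))) + (1) * (l * cx (Q (inord 1%N))) + (-1) * (l * cx (Q (inord 2%N))) + (1) * (l * cx (Q (inord 3%N))) + (1) * (l * cx (Q (inord 4%N))) + (-1) * (l * cx (Q (inord 5%N))) + (1) * (l * cx (Q (inord 6%N))) + (-1) * (l * cx (Q (inord 7%N)))); last by ring.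
    rewrite -e0x -e1x -e2x -e3x -e4x -e5x -e6x -e7x; ring.
  + apply: (mulfI hl); rewrite mulr0.
    rewrite (_ : l * _ = (-1) * (l * cy (Q (inord 0%N))) + (1) * (l * cy (Q (inord 1%N))) + (-1) * (l * cy (Q (inord 2%N))) + (1) * (l * cy (Q (inord 3%N))) + (1) * (l * cy (Q (inord 4%N))) + (-1) * (l * cy (Q (inord 5%N))) + (1) * (l * cy (Q (inord 6%N))) + (-1) * (l * cy (Q (inord 7%N)))); last by ring.
    rewrite -e0y -e1y -e2y -e3y -e4y -e5y -e6y -e7y; ring.
  + apply: (mulfI hl); rewrite mulr0.
    rewrite (_ : l * _ = (-1) * (l * cz (Q (inord 0%N))) + (1) * (l * cz (Q (inord 1%N))) + (-1) * (l * cz (Q (inord 2%N))) + (1) * (l * cz (Q (inord 3%N))) + (1) * (l * cz (Q (inord 4%N))) + (-1) * (l * cz (Q (inord 5%N))) + (1) * (l * cz (Q (inord 6%N))) + (-1) * (l * cz (Q (inord 7%N)))); last by ring.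
    rewrite -e0z -e1z -e2z -e3z -e4z -e5z -e6z -e7z; ring.
- apply: vec_eq; rewrite /tA /tB /tD /tE /tU /tV /tW; lin.
  +
    rewrite (_ : l * _ = (-1) * (l * cx (Q (inord 0%N))) + (1) * (l * cx (Q (inord 1%N))) + (1) * (l * cx (Q (inord 2%N))) + (-1) * (l * cx (Q (inord 3%N))) + (-1) * (l * cx (Q (inord 4%N))) + (1) * (l * cx (Q (inord 5%N))) + (1) * (l * cx (Q (inord 6%N))) + (-1) * (l * cx (Q (inord 7%N)))); last by ring.
    rewrite -e0x -e1x -e2x -e3x -e4x -e5x -e6x -e7x; field; done.
  +
    rewrite (_ : l * _ = (-1) * (l * cy (Q (inord 0%N))) + (1) * (l * cy (Q (inord 1%N))) + (1) * (l * cy (Q (inord 2%N))) + (-1) * (l * cy (Q (inord 3%N))) + (-1) * (l * cy (Q (inord 4%N))) + (1) * (l * cy (Q (inord 5%N))) + (1) * (l * cy (Q (inord 6%N))) + (-1) * (l * cy (Q (inord 7%N)))); last by ring.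
    rewrite -e0y -e1y -e2y -e3y -e4y -e5y -e6y -e7y; field; done.
  +
    rewrite (_ : l * _ = (-1) * (l * cz (Q (inord 0%N))) + (1) * (l * cz (Q (inord 1%N))) + (1) * (l * cz (Q (inord 2%N))) + (-1) * (l * cz (Q (inord 3%N))) + (-1) * (l * cz (Q (inord 4%N))) + (1) * (l * cz (Q (inord 5%N))) + (1) * (l * cz (Q (inord 6%N))) + (-1) * (l * cz (Q (inord 7%N)))); last by ring.
    rewrite -e0z -e1z -e2z -e3z -e4z -e5z -e6z -e7z; field; done.
- apply: vec_eq; rewrite /tA /tB /tD /tE /tU /tV /tW; lin.
  +
    rewrite (_ : l * _ = (-1) * (l * cx (Q (inord 0%N))) + (-1) * (l * cx (Q (inord 1%N))) + (1) * (l * cx (Q (inord 2%N))) + (1) * (l * cx (Q (inord 3%N))) + (-1) * (l * cx (Q (inord 4%N))) + (-1) * (l * cx (Q (inord 5%N))) + (1) * (l * cx (Q (inord 6%N))) + (1) * (l * cx (Q (inord 7%N)))); last by ring.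
    rewrite -e0x -e1x -e2x -e3x -e4x -e5x -e6x -e7x; field; done.
  +
    rewrite (_ : l * _ = (-1) * (l * cy (Q (inord 0%N))) + (-1) * (l * cy (Q (inord 1%N))) + (1) * (l * cy (Q (inord 2%N))) + (1) * (l * cy (Q (inord 3%N))) + (-1) * (l * cy (Q (inord 4%N))) + (-1) * (l * cy (Q (inord 5%N))) + (1) * (l * cy (Q (inord 6%N))) + (1) * (l * cy (Q (inord 7%N)))); last by ring.
    rewrite -e0y -e1y -e2y -e3y -e4y -e5y -e6y -e7y; field; done.
  +
    rewrite (_ : l * _ = (-1) * (l * cz (Q (inord 0%N))) + (-1) * (l * cz (Q (inord 1%N))) + (1) * (l * cz (Q (inord 2%N))) + (1) * (l * cz (Q (inord 3%N))) + (-1) * (l * cz (Q (inord 4%N))) + (-1) * (l * cz (Q (inord 5%N))) + (1) * (l * cz (Q (inord 6%N))) + (1) * (l * cz (Q (inord 7%N)))); last by ring.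
    rewrite -e0z -e1z -e2z -e3z -e4z -e5z -e6z -e7z; field; done.
- apply: vec_eq; rewrite /tA /tB /tD /tE /tU /tV /tW; lin.
  +
    rewrite (_ : l * _ = (-1) * (l * cx (Q (inord 0%N))) + (-1) * (l * cx (Q (inord 1%N))) + (-1) * (l * cx (Q (inord 2%N))) + (-1) * (l * cx (Q (inord 3%N))) + (1) * (l * cx (Q (inord 4%N))) + (1) * (l * cx (Q (inord 5%N))) + (1) * (l * cx (Q (inord 6%N))) + (1) * (l * cx (Q (inord 7%N)))); last by ring.
    rewrite -e0x -e1x -e2x -e3x -e4x -e5x -e6x -e7x; field; done.
  +
    rewrite (_ : l * _ = (-1) * (l * cy (Q (inord 0%N))) + (-1) * (l * cy (Q (inord 1%N))) + (-1) * (l * cy (Q (inord 2%N))) + (-1) * (l * cy (Q (inord 3%N))) + (1) * (l * cy (Q (inord 4%N))) + (1) * (l * cy (Q (inord 5%N))) + (1) * (l * cy (Q (inord 6%N))) + (1) * (l * cy (Q (inord 7%N)))); last by ring.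
    rewrite -e0y -e1y -e2y -e3y -e4y -e5y -e6y -e7y; field; done.
  +
    rewrite (_ : l * _ = (-1) * (l * cz (Q (inord 0%N))) + (-1) * (l * cz (Q (inord 1%N))) + (-1) * (l * cz (Q (inord 2%N))) + (-1) * (l * cz (Q (inord 3%N))) + (1) * (l * cz (Q (inord 4%N))) + (1) * (l * cz (Q (inord 5%N))) + (1) * (l * cz (Q (inord 6%N))) + (1) * (l * cz (Q (inord 7%N)))); last by ring.
    rewrite -e0z -e1z -e2z -e3z -e4z -e5z -e6z -e7z; field; done.
Qed.
Lemma tUq (P : 'I_8 -> vec) (C : vec) (mu : R) : tU (fun i => mu *: P i + C) = mu *: tU P.
Proof. apply: vec_eq; rewrite /tU; lin2; ring. Qed.
Lemma tVq (P : 'I_8 -> vec) (C : vec) (mu : R) : tV (fun i => mu *: P i + C) = mu *: tV P.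
Proof. apply: vec_eq; rewrite /tV; lin2; ring. Qed.
Lemma tWq (P : 'I_8 -> vec) (C : vec) (mu : R) : tW (fun i => mu *: P i + C) = mu *: tW P.
Proof. apply: vec_eq; rewrite /tW; lin2; ring. Qed.
Lemma tAq (P : 'I_8 -> vec) (C : vec) (mu : R) : tA (fun i => mu *: P i + C) = mu *: tA P.
Proof. apply: vec_eq; rewrite /tA; lin2; ring. Qed.
Lemma tBq (P : 'I_8 -> vec) (C : vec) (mu : R) : tB (fun i => mu *: P i + C) = mu *: tB P.
Proof. apply: vec_eq; rewrite /tB; lin2; ring. Qed.
Lemma tDq (P : 'I_8 -> vec) (C : vec) (mu : R) : tD (fun i => mu *: P i + C) = mu *: tD P.
Proof. apply: vec_eq; rewrite /tD; lin2; ring. Qed.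
Lemma tEq (P : 'I_8 -> vec) (C : vec) (mu : R) : tE (fun i => mu *: P i + C) = mu *: tE P.
Proof. apply: vec_eq; rewrite /tE; lin2; ring. Qed.
Lemma cross_scale (m : R) (x y : vec) : cross (m *: x) (m *: y) = (m * m) *: cross x y.
Proof. apply: vec_eq; lin; ring. Qed.
Lemma recon0 (P : 'I_8 -> vec) : P (inord 0%N) = (1/8) *: (tC P - tU P - tV P - tW P + tA P + tB P + tD P - tE P).
Proof. apply: vec_eq; rewrite /tC /tU /tV /tW /tA /tB /tD /tE; lin2; field; done. Qed.
Lemma recon1 (P : 'I_8 -> vec) : P (inord 1%N) = (1/8) *: (tC P + tU P - tV P - tW P - tA P + tB P - tD P + tE P).
Proof. apply: vec_eq; rewrite /tC /tU /tV /tW /tA /tB /tD /tE; lin2; field; done. Qed.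
Lemma recon2 (P : 'I_8 -> vec) : P (inord 2%N) = (1/8) *: (tC P + tU P + tV P - tW P + tA P - tB P - tD P - tE P).
Proof. apply: vec_eq; rewrite /tC /tU /tV /tW /tA /tB /tD /tE; lin2; field; done. Qed.
Lemma recon3 (P : 'I_8 -> vec) : P (inord 3%N) = (1/8) *: (tC P - tU P + tV P - tW P - tA P - tB P + tD P + tE P).
Proof. apply: vec_eq; rewrite /tC /tU /tV /tW /tA /tB /tD /tE; lin2; field; done. Qed.
Lemma recon4 (P : 'I_8 -> vec) : P (inord 4%N) = (1/8) *: (tC P - tU P - tV P + tW P + tA P - tB P - tD P + tE P).
Proof. apply: vec_eq; rewrite /tC /tU /tV /tW /tA /tB /tD /tE; lin2; field; done. Qed.
Lemma recon5 (P : 'I_8 -> vec) : P (inord 5%N) = (1/8) *: (tC P + tU P - tV P + tW P - tA P - tB P + tD P - tE P).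
Proof. apply: vec_eq; rewrite /tC /tU /tV /tW /tA /tB /tD /tE; lin2; field; done. Qed.
Lemma recon6 (P : 'I_8 -> vec) : P (inord 6%N) = (1/8) *: (tC P + tU P + tV P + tW P + tA P + tB P + tD P + tE P).
Proof. apply: vec_eq; rewrite /tC /tU /tV /tW /tA /tB /tD /tE; lin2; field; done. Qed.
Lemma recon7 (P : 'I_8 -> vec) : P (inord 7%N) = (1/8) *: (tC P - tU P + tV P + tW P - tA P + tB P - tD P - tE P).
Proof. apply: vec_eq; rewrite /tC /tU /tV /tW /tA /tB /tD /tE; lin2; field; done. Qed.
Lemma allc_lem (p : 'I_8 -> vec) : tA p = 0 -> tB p = 0 -> tD p = 0 -> tE p = 0 -> tU p = 0 -> tV p = 0 -> tW p = 0 -> forall i : 'I_8, p i = (1/8) *: tC p.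
Proof.
move=> hA hB hD hE hU hV hW i.
rewrite -(inord_val i); case: i => m Hi /=.
case: m Hi => [|[|[|[|[|[|[|[|//]]]]]]]] Hi.
all: [> rewrite (recon0 p)|rewrite (recon1 p)|rewrite (recon2 p)|rewrite (recon3 p)
      |rewrite (recon4 p)|rewrite (recon5 p)|rewrite (recon6 p)|rewrite (recon7 p)].
all: by rewrite hA hB hD hE hU hV hW !(addr0, subr0).
Qed.

Lemma verts (p : 'I_8 -> vec) : tA p = 0 -> tB p = 0 -> tD p = 0 -> tE p = 0 ->
  pt p 1 = (1/8) *: tC p - (1/8) *: tU p - (1/8) *: tV p - (1/8) *: tW p /\
  pt p 2 = (1/8) *: tC p + (1/8) *: tU p - (1/8) *: tV p - (1/8) *: tW p /\
  pt p 3 = (1/8) *: tC p + (1/8) *: tU p + (1/8) *: tV p - (1/8) *: tW p /\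
  pt p 4 = (1/8) *: tC p - (1/8) *: tU p + (1/8) *: tV p - (1/8) *: tW p /\
  pt p 5 = (1/8) *: tC p - (1/8) *: tU p - (1/8) *: tV p + (1/8) *: tW p /\
  pt p 6 = (1/8) *: tC p + (1/8) *: tU p - (1/8) *: tV p + (1/8) *: tW p /\
  pt p 7 = (1/8) *: tC p + (1/8) *: tU p + (1/8) *: tV p + (1/8) *: tW p /\
  pt p 8 = (1/8) *: tC p - (1/8) *: tU p + (1/8) *: tV p + (1/8) *: tW p.
Proof.
move=> hA hB hD hE.
split; first by have -> : pt p 1 = p (inord 0%N) by []; rewrite (recon0 p) hA hB hD hE; move: (tC p) (tU p) (tV p) (tW p) => C U V W; rewrite !(addr0, subr0) !scalerDr ?scalerN.
split; first by have -> : pt p 2 = p (inord 1%N) by []; rewrite (recon1 p) hA hB hD hE; move: (tC p) (tU p) (tV p) (tW p) => C U V W; rewrite !(addr0, subr0) !scalerDr ?scalerN.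
split; first by have -> : pt p 3 = p (inord 2%N) by []; rewrite (recon2 p) hA hB hD hE; move: (tC p) (tU p) (tV p) (tW p) => C U V W; rewrite !(addr0, subr0) !scalerDr ?scalerN.
split; first by have -> : pt p 4 = p (inord 3%N) by []; rewrite (recon3 p) hA hB hD hE; move: (tC p) (tU p) (tV p) (tW p) => C U V W; rewrite !(addr0, subr0) !scalerDr ?scalerN.
split; first by have -> : pt p 5 = p (inord 4%N) by []; rewrite (recon4 p) hA hB hD hE; move: (tC p) (tU p) (tV p) (tW p) => C U V W; rewrite !(addr0, subr0) !scalerDr ?scalerN.
split; first by have -> : pt p 6 = p (inord 5%N) by []; rewrite (recon5 p) hA hB hD hE; move: (tC p) (tU p) (tV p) (tW p) => C U V W; rewrite !(addr0, subr0) !scalerDr ?scalerN.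
split; first by have -> : pt p 7 = p (inord 6%N) by []; rewrite (recon6 p) hA hB hD hE; move: (tC p) (tU p) (tV p) (tW p) => C U V W; rewrite !(addr0, subr0) !scalerDr ?scalerN.
by have -> : pt p 8 = p (inord 7%N) by []; rewrite (recon7 p) hA hB hD hE; move: (tC p) (tU p) (tV p) (tW p) => C U V W; rewrite !(addr0, subr0) !scalerDr ?scalerN.
Qed.

Lemma geo (a b ux uy uz vx vy vz wx wy wz : R) : a != 0 -> b != 0 ->
  a * (vy * wz - vz * wy) = b * ux ->
  a * (vz * wx - vx * wz) = b * uy ->
  a * (vx * wy - vy * wx) = b * uz ->
  a * (wy * uz - wz * uy) = b * vx ->
  a * (wz * ux - wx * uz) = b * vy ->
  a * (wx * uy - wy * ux) = b * vz ->
  a * (uy * vz - uz * vy) = b * wx ->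
  a * (uz * vx - ux * vz) = b * wy ->
  a * (ux * vy - uy * vx) = b * wz ->
  [/\ ux * vx + uy * vy + uz * vz = 0,
      vx * wx + vy * wy + vz * wz = 0,
      ux * wx + uy * wy + uz * wz = 0,
      ux * ux + uy * uy + uz * uz = vx * vx + vy * vy + vz * vz &
      vx * vx + vy * vy + vz * vz = wx * wx + wy * wy + wz * wz].
Proof.
move=> ha hb h1 h2 h3 h4 h5 h6 h7 h8 h9; split.
- apply: (mulfI hb); rewrite mulr0.
  have -> : b * (ux * vx + uy * vy + uz * vz) = (b * ux) * vx + (b * uy) * vy + (b * uz) * vz by ring.
  rewrite -h1 -h2 -h3; ring.
- apply: (mulfI hb); rewrite mulr0.
  have -> : b * (vx * wx + vy * wy + vz * wz) = (b * vx) * wx + (b * vy) * wy + (b * vz) * wz by ring.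
  rewrite -h4 -h5 -h6; ring.
- apply: (mulfI hb); rewrite mulr0.
  have -> : b * (ux * wx + uy * wy + uz * wz) = (b * ux) * wx + (b * uy) * wy + (b * uz) * wz by ring.
  rewrite -h1 -h2 -h3; ring.
- apply: (mulfI hb).
  have -> : b * (ux * ux + uy * uy + uz * uz) = (b * ux) * ux + (b * uy) * uy + (b * uz) * uz by ring.
  have -> : b * (vx * vx + vy * vy + vz * vz) = (b * vx) * vx + (b * vy) * vy + (b * vz) * vz by ring.
  rewrite -h1 -h2 -h3 -h4 -h5 -h6; ring.
- apply: (mulfI hb).
  have -> : b * (vx * vx + vy * vy + vz * vz) = (b * vx) * vx + (b * vy) * vy + (b * vz) * vz by ring.
  have -> : b * (wx * wx + wy * wy + wz * wz) = (b * wx) * wx + (b * wy) * wy + (b * wz) * wz by ring.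
  rewrite -h4 -h5 -h6 -h7 -h8 -h9; ring.
Qed.

End S.
Ltac lin := rewrite ?(cxD, cxN, cxZ, cx0, cyD, cyN, cyZ, cy0, czD, czN, czZ, cz0).

Theorem mainTheorem10 (R : realType) (p : 'I_8 -> 'rV[R]_3) :
  Y_optimal p -> is_cube p.
Proof.
move=> [[i0 [j0 hij]] [mu [c [l [hmu [hl H]]]]]].
have hmu0 : mu != 0 by rewrite gt_eqF.
have [hA [hB [hD [hE [c1 [c2 c3]]]]]] := Qfacts (Q := fun i => mu *: p i + c) hl H.
rewrite !(tUq, tVq, tWq, tAq, tBq, tDq, tEq) in hA hB hD hE c1 c2 c3.
have sc0 : forall x : 'rV[R]_3, mu *: x = 0 -> x = 0.
  by move=> x /eqP; rewrite scaler_eq0 (negbTE hmu0) => /eqP.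
move/sc0: hA => hA; move/sc0: hB => hB; move/sc0: hD => hD; move/sc0: hE => hE.
rewrite cross_scale scalerA in c1.
rewrite cross_scale scalerA in c2.
rewrite cross_scale scalerA in c3.
have k1 := congr1 (@cx R) c1; have k2 := congr1 (@cy R) c1; have k3 := congr1 (@cz R) c1.
have k4 := congr1 (@cx R) c2; have k5 := congr1 (@cy R) c2; have k6 := congr1 (@cz R) c2.
have k7 := congr1 (@cx R) c3; have k8 := congr1 (@cy R) c3; have k9 := congr1 (@cz R) c3.
rewrite !(cxZ, cx_cross) in k1.
rewrite !(cxZ, cx_cross) in k4.
rewrite !(cxZ, cx_cross) in k7.
rewrite !(cyZ, cy_cross) in k2.
rewrite !(cyZ, cy_cross) in k5.
rewrite !(cyZ, cy_cross) in k8.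
rewrite !(czZ, cz_cross) in k3.
rewrite !(czZ, cz_cross) in k6.
rewrite !(czZ, cz_cross) in k9.
have [g1 g2 g3 g4 g5] := geo (mulf_neq0 hmu0 hmu0) (mulf_neq0 hl hmu0) k1 k2 k3 k4 k5 k6 k7 k8 k9.
clear k1 k2 k3 k4 k5 k6 k7 k8 k9 c1 c2 c3 H.
exists ((1/8) *: tC p), ((1/8) *: tU p), ((1/8) *: tV p), ((1/8) *: tW p).
split.
  apply/negP => /eqP hu0.
  have hU : tU p = 0.
    by move/eqP: hu0; rewrite scaler_eq0 => /orP [|/eqP //]; rewrite (_ : 1/8 = 8^-1 :> R) ?invr_eq0 ?pnatr_eq0 // mul1r.
  have hU1 : cx (tU p) = 0 by rewrite hU cx0.
  have hU2 : cy (tU p) = 0 by rewrite hU cy0.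
  have hU3 : cz (tU p) = 0 by rewrite hU cz0.
  have hV : tV p = 0 by apply: vec_eq; rewrite ?cx0 ?cy0 ?cz0; nra.
  have hV1 : cx (tV p) = 0 by rewrite hV cx0.
  have hV2 : cy (tV p) = 0 by rewrite hV cy0.
  have hV3 : cz (tV p) = 0 by rewrite hV cz0.
  have hW : tW p = 0 by apply: vec_eq; rewrite ?cx0 ?cy0 ?cz0; nra.
  have allc := allc_lem hA hB hD hE hU hV hW.
  by move: hij; rewrite !allc eqxx.
do 5 (split; first by rewrite !dotE !(cxZ, cyZ, czZ); lra).
exact: verts hA hB hD hE.
Qed.
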